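(* Let $u^{(1)},\ldots,u^{(k)}\in(\mathbb{N}\cup\{0\})^m$ and put $M:=\bigcup_{j=1}^k\{x\in\mathbb{R}^m:0\leq x\leq u^{(j)}\}$ (entrywise order). Then $M\cap\mathbb{Z}^m$ is the unique subset $C\subseteq M$ with $|C|=|M\cap\mathbb{Z}^m|$ whose minimum distance $\min\{\|x-y\|_\infty:x,y\in C,x\neq y\}$ equals $1$. *)

(* Defs.v *)
From HB Require Import structures.
From mathcomp Require Import all_boot all_order all_algebra.
From mathcomp Require Import boolp classical_sets cardinality reals.
Set Implicit Arguments. Unset Strict Implicit. Unset Printing Implicit Defensive.
Import Order.TTheory GRing.Theory Num.Theory.
Local Open Scope ring_scope.
Local Open Scope classical_set_scope.

(* Points of R^m are row vectors 'rV[R]_m; coordinate i of x is x ord0 i. *)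

Definition supnorm (R : realType) (m : nat) (x : 'rV[R]_m) : R :=
  \big[Num.max/0]_(i < m) `|x ord0 i|.

Definition box_union (R : realType) (m k : nat) (u : 'I_k -> 'I_m -> nat)
  : set 'rV[R]_m :=
  [set x | exists j : 'I_k, forall i : 'I_m, 0 <= x ord0 i <= (u j i)%:R].

Definition intpts (R : realType) (m : nat) : set 'rV[R]_m :=
  [set x | forall i : 'I_m, exists z : int, x ord0 i = z%:~R].

Definition min_dist_eq1 (R : realType) (m : nat) (C : set 'rV[R]_m) : Prop :=
  (forall x y, C x -> C y -> x <> y -> 1 <= supnorm (x - y)) /\
  (exists x y, [/\ C x, C y, x <> y & supnorm (x - y) = 1]).

(* Main.v *)
Require Import Defs.
From HB Require Import structures.
From mathcomp Require Import all_boot all_order all_algebra finmap.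
From mathcomp Require Import boolp classical_sets cardinality reals.
From mathcomp Require Import lra.
Import Order.TTheory GRing.Theory Num.Theory.
Local Open Scope ring_scope.
Local Open Scope classical_set_scope.

Section Aux.
Variables (R : realType) (m : nat).
Implicit Types (x y v : 'rV[R]_m).

Lemma supnorm_ge v i : `|v ord0 i| <= supnorm v.
Proof. rewrite /supnorm; exact: le_bigmax. Qed.

Lemma supnorm_lt1 v : (forall i, `|v ord0 i| < 1) -> supnorm v < 1.
Proof. by move=> H; rewrite /supnorm; apply: bigmax_lt => // i _; apply: H. Qed.

Lemma supnorm_le v c : 0 <= c -> (forall i, `|v ord0 i| <= c) -> supnorm v <= c.
Proof. by move=> c0 H; rewrite /supnorm; apply: bigmax_le => // i _; apply: H. Qed.

Definition fl x : 'rV[R]_m := \row_i ((Num.floor (x ord0 i))%:~R).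
Definition cl x : 'rV[R]_m := \row_i ((Num.ceil (x ord0 i))%:~R).

Lemma fl_inj (C : set 'rV[R]_m) :
  (forall x y, C x -> C y -> x <> y -> 1 <= supnorm (x - y)) ->
  forall x y, C x -> C y -> fl x = fl y -> x = y.
Proof.
move=> H x y Cx Cy e; apply: contrapT => nxy.
have := H x y Cx Cy nxy; apply/negP; rewrite -ltNge.
apply: supnorm_lt1 => i.
have /(congr1 (fun v => v ord0 i)) := e; rewrite !mxE => ei.
have := floor_itv (x ord0 i); have := floor_itv (y ord0 i).
rewrite !intrD ei => /andP[h1 h2] /andP[h3 h4].
rewrite ltr_norml; apply/andP; split; lra.
Qed.

Lemma cl_inj (C : set 'rV[R]_m) :
  (forall x y, C x -> C y -> x <> y -> 1 <= supnorm (x - y)) ->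
  forall x y, C x -> C y -> cl x = cl y -> x = y.
Proof.
move=> H x y Cx Cy e; apply: contrapT => nxy.
have := H x y Cx Cy nxy; apply/negP; rewrite -ltNge.
apply: supnorm_lt1 => i.
have /(congr1 (fun v => v ord0 i)) := e; rewrite !mxE => ei.
have := ceil_itv (x ord0 i); have := ceil_itv (y ord0 i).
rewrite !intrB ei => /andP[h1 h2] /andP[h3 h4].
rewrite ltr_norml; apply/andP; split; lra.
Qed.


Lemma psum_seq_eq0 (T : eqType) (r : seq T) (F : T -> R) :
  (forall t, t \in r -> 0 <= F t) -> \sum_(t <- r) F t = 0 ->
  forall t, t \in r -> F t = 0.
Proof.
elim: r => [|a r IH] H; first by move=> _ t.
have Ha : 0 <= F a by apply: H; rewrite inE eqxx.
have Hr : forall t, t \in r -> 0 <= F t by move=> t tr; apply: H; rewrite inE tr orbT.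
have Sr : 0 <= \sum_(t <- r) F t by rewrite big_seq; apply: sumr_ge0.
rewrite big_cons => /eqP; rewrite paddr_eq0 // => /andP[/eqP Fa /eqP Fr] t.
by rewrite inE => /orP[/eqP->|yr] //; apply: IH.
Qed.

End Aux.
Arguments fl {R m}.
Arguments supnorm_ge {R m}.
Arguments supnorm_le {R m}.
Arguments fl_inj {R m C}.
Arguments cl_inj {R m C}.
Arguments psum_seq_eq0 {R T}.
Arguments cl {R m}.

Lemma image_eq_card (T U : choiceType) (A : set T) (B : set U) (f : T -> U) :
  finite_set B -> (A #= B)%card ->
  (forall x y, A x -> A y -> f x = f y -> x = y) -> f @` A `<=` B -> f @` A = B.
Proof.
move=> fB AB inj sub.
have fA : finite_set A by rewrite (eq_finite_set AB).
have fI : finite_set (f @` A) by exact: finite_image.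
have cI : (f @` A #= B)%card.
  apply: card_eq_trans AB; apply: inj_card_eq => x y; rewrite !in_setE; exact: inj.
have ce : #|` fset_set (f @` A)| = #|` fset_set B| by apply/(fcard_eq fI fB).
apply: fset_set_inj => //; apply/fsetP; apply/(fsubset_cardP ce).
by rewrite -fset_set_sub.
Qed.

Section Box.
Variables (R : realType) (m k : nat) (u : 'I_k -> 'I_m -> nat).

Lemma fl_Z (x : 'rV[R]_m) : box_union u x -> (box_union u `&` @intpts R m) (fl x).
Proof.
case=> j Hj; split; last by move=> i; exists (Num.floor (x ord0 i)); rewrite mxE.
exists j => i; rewrite mxE; have /andP[a b] := Hj i; apply/andP; split.
  by rewrite ler0z floor_ge0.
exact: le_trans (floor_le _) b.
Qed.

Lemma cl_Z (x : 'rV[R]_m) : box_union u x -> (box_union u `&` @intpts R m) (cl x).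
Proof.
case=> j Hj; split; last by move=> i; exists (Num.ceil (x ord0 i)); rewrite mxE.
exists j => i; rewrite mxE; have /andP[a b] := Hj i; apply/andP; split.
  exact: le_trans a (ceil_ge _).
change ((Num.ceil (x ord0 i))%:~R <= ((u j i)%:Z)%:~R :> R).
by rewrite ler_int ceil_le_int.
Qed.

Lemma finite_Z : finite_set (box_union u `&` @intpts R m).
Proof.
pose U := (\max_(j < k) \max_(i < m) u j i)%N.
pose g := fun f : {ffun 'I_m -> 'I_U.+1} => (\row_i ((f i : nat)%:R) : 'rV[R]_m).
apply: (sub_finite_set _ (finite_image g (@finite_finset _ setT))).
move=> z [[j Hj] Iz].
exists [ffun i => inord (absz (Num.floor (z ord0 i)))] => //.
apply/rowP => i; rewrite !mxE ffunE.
have [n zn] := Iz i; have /andP[a b] := Hj i.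
move: a b; rewrite zn; case: n zn => [a|a] zn; rewrite ?ler0z // => _ b.
rewrite intrKfloor /= inordK //.
have : (a <= u j i)%N.
  have : (Posz a)%:~R <= ((u j i)%:Z)%:~R :> R by [].
  by rewrite ler_int.
move=> le; rewrite ltnS; apply: leq_trans le _.
exact: leq_trans (leq_bigmax (F := fun i => u j i) i) (leq_bigmax (F := fun j => \max_(i < m) u j i) j).
Qed.

End Box.

Theorem lemma4p2 (R : realType) (m k : nat) (u : 'I_k -> 'I_m -> nat)
  (hnz : exists (j : 'I_k) (i : 'I_m), u j i <> 0%N) :
  let M := @box_union R m k u in
  let Z := M `&` @intpts R m in
  min_dist_eq1 Z /\
  (forall C : set 'rV[R]_m, C `<=` M -> (C #= Z)%card -> min_dist_eq1 C -> C = Z).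
Proof.
move=> M Z.
have Zmin : forall x y, Z x -> Z y -> x <> y -> 1 <= supnorm (x - y).
  move=> x y [_ Ix] [_ Iy] nxy.
  have : [exists i, x ord0 i != y ord0 i].
    apply: contraT; rewrite negb_exists => /forallP H; exfalso; apply: nxy.
    by apply/rowP => i; have := H i; rewrite negbK => /eqP.
  case/existsP => i ne; apply: (le_trans _ (supnorm_ge _ i)).
  have [a ea] := Ix i; have [b eb] := Iy i.
  rewrite !mxE ea eb -intrB -intr_norm ler1z -gtz0_ge1 normr_gt0 subr_eq0.
  by apply: contra ne => /eqP aeb; rewrite ea eb aeb.
split.
  split => //.
  have [j [i uji]] := hnz.
  pose e : 'rV[R]_m := \row_l ((l == i)%:R).
  have Ze : Z e.
    split; last by move=> l; exists (l == i)%:Z; rewrite mxE.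
    exists j => l; rewrite mxE; case: (l == i) /eqP => [->|_] /=.
      by rewrite ler01 ler1n lt0n; apply/eqP.
    by rewrite lexx ler0n.
  have Z0 : Z 0.
    split; last by move=> l; exists 0; rewrite mxE.
    by exists j => l; rewrite mxE lexx ler0n.
  exists 0, e; split => //.
    move/(congr1 (fun v : 'rV[R]_m => v ord0 i)); rewrite !mxE eqxx => /eqP.
    by rewrite eq_sym oner_eq0.
  apply/eqP; rewrite eq_le; apply/andP; split.
    apply: supnorm_le => // l; rewrite !mxE sub0r normrN.
    by case: (l == i); rewrite ?normr1 ?normr0.
  by apply: (le_trans _ (supnorm_ge _ i)); rewrite !mxE eqxx sub0r normrN normr1.
move=> C CM CZ [hC _].
have fZ : finite_set Z by exact: finite_Z.
have fC : finite_set C by rewrite (eq_finite_set CZ).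
have flC : fl @` C = Z.
  apply: image_eq_card => //; first exact: fl_inj hC.
  by move=> _ [x Cx <-]; apply: fl_Z; apply: CM.
have clC : cl @` C = Z.
  apply: image_eq_card => //; first exact: cl_inj hC.
  by move=> _ [x Cx <-]; apply: cl_Z; apply: CM.
pose w := fun v : 'rV[R]_m => \sum_(i < m) v ord0 i.
have inFC : forall x, x \in fset_set C -> C x.
  by move=> x; rewrite in_fset_set // in_setE.
have S1 : \sum_(x <- fset_set C) w (fl x) = \sum_(z <- fset_set Z) w z.
  rewrite -flC (fset_set_image _ fC) big_imfset //=.
  by move=> x y Hx Hy; apply: (fl_inj hC _ _ (inFC _ Hx) (inFC _ Hy)).
have S2 : \sum_(x <- fset_set C) w (cl x) = \sum_(z <- fset_set Z) w z.
  rewrite -clC (fset_set_image _ fC) big_imfset //=.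
  by move=> x y Hx Hy; apply: (cl_inj hC _ _ (inFC _ Hx) (inFC _ Hy)).
have le_fc : forall (x : 'rV[R]_m) (i : 'I_m), fl x ord0 i <= x ord0 i <= cl x ord0 i.
  by move=> x i; rewrite !mxE floor_le ceil_ge.
have D0 := psum_seq_eq0 (fset_set C) (fun x => w (cl x) - w (fl x)).
have pos : forall (x : 'rV[R]_m) (i : 'I_m), true -> 0 <= cl x ord0 i - fl x ord0 i.
  by move=> x i _; have /andP[a b] := le_fc x i; rewrite subr_ge0 (le_trans a b).
have posall : forall t, t \in fset_set C -> 0 <= w (cl t) - w (fl t).
  by move=> t _; rewrite /w -sumrB; apply: sumr_ge0; apply: pos.
have sum0 : \sum_(t <- fset_set C) (w (cl t) - w (fl t)) = 0.
  by rewrite sumrB S1 S2 subrr.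
have flK : forall x, C x -> fl x = x.
  move=> x Cx.
  have xin : x \in fset_set C by rewrite in_fset_set // in_setE.
  have := D0 posall sum0 x xin.
  rewrite /w -sumrB => H; have {}H := psumr_eq0P (pos x) H.
  apply/rowP => i; have /andP[a b] := le_fc x i.
  have := H i isT; move/eqP; rewrite subr_eq0 => /eqP ei.
  by apply/eqP; rewrite eq_le a -ei b.
apply/seteqP; split.
  by move=> x Cx; rewrite -(flK x Cx); apply: fl_Z; apply: CM.
by move=> z; rewrite -flC => -[x Cx <-]; rewrite flK.
Qed.
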